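(* Let $L$ be a complete enriched graded Lie algebra such that $\dim(L/L^{(2)})_p<\infty$ for every $p$. Then (i) for every $p$ and every integer $k$ there is an index $\alpha$ such that the projection $(L/L^{(k)})_p\to(L_\alpha/L_\alpha^k)_p$ is an isomorphism; (ii) $L^k=L^{(k)}$ for all $k\ge1$, and so $L$ is pronilpotent.
   Context: A complete enriched Lie algebra is a graded Lie algebra $L=L_{\ge0}$ over $\mathbb Q$ with a directed family (under inclusion of kernels) of surjective morphisms $\rho_\alpha:L\to L_\alpha$ onto finite-dimensional nilpotent Lie algebras, $\bigcap\ker\rho_\alpha=0$, and $L\cong\varprojlim_\alpha L_\alpha$. $L^k$ is the span of iterated brackets of length $k$ (lower central series), and $L^{(k)}$ is the closure of $L^k$, i.e. $\varprojlim_\alpha\rho_\alpha(L^k)$. $L$ is pronilpotent if $L\to\varprojlim_nL/L^n$ is an isomorphism. *)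

(* Defs.v *)
From HB Require Import structures.
From mathcomp Require Import all_boot all_order all_algebra.
Set Implicit Arguments. Unset Strict Implicit. Unset Printing Implicit Defensive.
Import Order.TTheory GRing.Theory Num.Theory.
Local Open Scope ring_scope.

(* The carrier is a
   Q-vector space; [gla_deg p] is the subspace L_p of homogeneous elements
   of degree p; L is the (internal) direct sum of the L_p. *)
Record GLie := {
  gla_carrier :> lmodType rat;
  gla_br : gla_carrier -> gla_carrier -> gla_carrier;
  gla_deg : nat -> gla_carrier -> Prop;
  gla_brDl : forall (c : rat) x y z, gla_br (c *: x + y) z = c *: gla_br x z + gla_br y z;
  gla_brDr : forall (c : rat) x y z, gla_br x (c *: y + z) = c *: gla_br x y + gla_br x z;
  gla_deg0 : forall p, gla_deg p 0;
  gla_degD : forall p (c : rat) x y, gla_deg p x -> gla_deg p y -> gla_deg p (c *: x + y);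
  gla_decomp : forall x, exists (N : nat) (f : nat -> gla_carrier),
      (forall p, gla_deg p (f p)) /\ x = \sum_(p < N) f p;
  gla_direct : forall (N : nat) (f : nat -> gla_carrier),
      (forall p, gla_deg p (f p)) -> \sum_(p < N) f p = 0 -> forall p, (p < N)%N -> f p = 0;
  gla_br_deg : forall p q x y, gla_deg p x -> gla_deg q y -> gla_deg (p + q) (gla_br x y);
  gla_antisym : forall p q x y, gla_deg p x -> gla_deg q y ->
      gla_br x y = - (((-1) ^+ (p * q) : rat) *: gla_br y x);
  gla_jacobi : forall p q x y z, gla_deg p x -> gla_deg q y ->
      gla_br x (gla_br y z) = gla_br (gla_br x y) z
                              + ((-1) ^+ (p * q) : rat) *: gla_br y (gla_br x z)
}.

Fixpoint lcs (L : GLie) (k : nat) : L -> Prop :=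
  match k with
  | 0 => fun _ => True
  | k'.+1 =>
      if k' is 0 then fun _ => True
      else fun x => exists (n : nat) (xs ys : 'I_n -> L),
          (forall i, @lcs L k' (ys i)) /\ x = \sum_(i < n) gla_br (xs i) (ys i)
  end.

Definition GLie_morph (L M : GLie) (f : L -> M) : Prop :=
  (forall (c : rat) x y, f (c *: x + y) = c *: f x + f y) /\
  (forall p x, gla_deg p x -> gla_deg p (f x)) /\
  (forall x y, f (gla_br x y) = gla_br (f x) (f y)).

(* finite-dimensional (total dimension) *)
Definition GLie_findim (M : GLie) : Prop :=
  exists (n : nat) (v : 'I_n -> M), forall x, exists c : 'I_n -> rat,
      x = \sum_(i < n) c i *: v i.

Definition GLie_nilpotent (M : GLie) : Prop :=
  exists n, forall x : M, lcs n x -> x = 0.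

Definition complete_enriched (L : GLie) (A : Type) (La : A -> GLie)
    (rho : forall a, L -> La a) : Prop :=
  inhabited A /\
      (forall a, GLie_morph (rho a) /\ forall y : La a, exists x, rho a x = y) /\
      (forall a, GLie_findim (La a) /\ GLie_nilpotent (La a)) /\
      (forall a b, exists g, forall x, rho g x = 0 -> rho a x = 0 /\ rho b x = 0) /\
      (forall x, (forall a, rho a x = 0) -> x = 0) /\
      (* L -> lim_a L_a is surjective (degreewise inverse limit along the
         maps L_g -> L_a induced when ker rho_g is contained in ker rho_a) *)
      (forall p (xa : forall a, La a),
          (forall a, gla_deg p (xa a)) ->
          (forall a g, (forall y, rho g y = 0 -> rho a y = 0) ->
                 forall y, rho g y = xa g -> rho a y = xa a) ->
          exists x, gla_deg p x /\ forall a, rho a x = xa a).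

(* L^{(k)} = closure of L^k = lim_a rho_a(L^k), seen inside L = lim_a L_a *)
Definition lcs_closure (L : GLie) (A : Type) (La : A -> GLie)
    (rho : forall a, L -> La a) (k : nat) (x : L) : Prop :=
  forall a, exists y : L, lcs k y /\ rho a y = rho a x.

(* dim (L / P)_p < oo, for a graded subspace P: finitely many degree-p
   elements span L_p modulo P. *)
Definition findim_quot_deg (L : GLie) (P : L -> Prop) (p : nat) : Prop :=
  exists (n : nat) (v : 'I_n -> L), (forall i, gla_deg p (v i)) /\
    forall x, gla_deg p x -> exists c : 'I_n -> rat, P (x - \sum_(i < n) c i *: v i).

(* L -> lim_n L/L^n is an isomorphism (degreewise inverse limit) *)
Definition pronilpotent (L : GLie) : Prop :=
  (forall x : L, (forall n, lcs n x) -> x = 0) /\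
  (forall p (xs : nat -> L), (forall n, gla_deg p (xs n)) ->
     (forall n, lcs n (xs n.+1 - xs n)) ->
     exists x, gla_deg p x /\ forall n, lcs n (x - xs n)).

(* Main.v *)
Require Import Defs.
From HB Require Import structures.
From mathcomp Require Import all_boot all_order all_algebra.
From Stdlib Require Import Classical IndefiniteDescription.
Set Implicit Arguments. Unset Strict Implicit. Unset Printing Implicit Defensive.
Import Order.TTheory GRing.Theory Num.Theory.
Local Open Scope ring_scope.

Section Lin.
Variables (U V : lmodType rat) (f : U -> V).
Hypothesis fL : forall (c : rat) x y, f (c *: x + y) = c *: f x + f y.

Lemma lin0 : f 0 = 0.
Proof.
have := fL 1 0 0; rewrite !scale1r !addr0.
by move/(congr1 (fun z => z - f 0)); rewrite addrK subrr => <-.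
Qed.
Lemma linD x y : f (x + y) = f x + f y.
Proof. by have := fL 1 x y; rewrite !scale1r. Qed.
Lemma linZ c x : f (c *: x) = c *: f x.
Proof. by have := fL c x 0; rewrite !addr0 lin0 addr0. Qed.
Lemma linN x : f (- x) = - f x.
Proof. by rewrite -scaleN1r linZ scaleN1r. Qed.
Lemma linB x y : f (x - y) = f x - f y.
Proof. by rewrite linD linN. Qed.
Lemma lin_sum (I : Type) (r : seq I) (P : pred I) (F : I -> U) :
  f (\sum_(i <- r | P i) F i) = \sum_(i <- r | P i) f (F i).
Proof. exact: (big_morph f linD lin0). Qed.
End Lin.

Definition subsp (V : lmodType rat) (P : V -> Prop) :=
  P 0 /\ forall (c : rat) x y, P x -> P y -> P (c *: x + y).

Section Subsp.
Variables (V : lmodType rat) (P : V -> Prop) (HP : subsp P).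
Lemma sp0 : P 0. Proof. by case: HP. Qed.
Lemma spD x y : P x -> P y -> P (x + y).
Proof. by move=> Hx Hy; have := HP.2 1 _ _ Hx Hy; rewrite scale1r. Qed.
Lemma spZ c x : P x -> P (c *: x).
Proof. by move=> Hx; have := HP.2 c _ _ Hx sp0; rewrite addr0. Qed.
Lemma spN x : P x -> P (- x).
Proof. by move=> Hx; rewrite -scaleN1r; apply: spZ. Qed.
Lemma spB x y : P x -> P y -> P (x - y).
Proof. by move=> Hx Hy; apply: spD => //; apply: spN. Qed.
Lemma sp_sum (I : Type) (r : seq I) (Q : pred I) (F : I -> V) :
  (forall i, Q i -> P (F i)) -> P (\sum_(i <- r | Q i) F i).
Proof.
move=> H; elim: r => [|i r IH]; first by rewrite big_nil; exact: sp0.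
rewrite big_cons; case: ifP => Qi //; exact: spD (H _ Qi) IH.
Qed.
End Subsp.

Section GL.
Variable M : GLie.
Local Notation br := (@gla_br M).
Local Notation deg := (@gla_deg M).

Let brL z : forall (c : rat) (x y : M), br (c *: x + y) z = c *: br x z + br y z.
Proof. by move=> c x y; apply: gla_brDl. Qed.
Let brR x : forall (c : rat) (y z : M), br x (c *: y + z) = c *: br x y + br x z.
Proof. by move=> c y z; apply: gla_brDr. Qed.

Lemma br0l z : br 0 z = 0. Proof. exact: (lin0 (brL z)). Qed.
Lemma br0r x : br x 0 = 0. Proof. exact: (lin0 (brR x)). Qed.
Lemma brDl x y z : br (x + y) z = br x z + br y z. Proof. exact: (linD (brL z)). Qed.
Lemma brDr x y z : br x (y + z) = br x y + br x z. Proof. exact: (linD (brR x)). Qed.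
Lemma brZl c x z : br (c *: x) z = c *: br x z. Proof. exact: (linZ (brL z)). Qed.
Lemma brZr c x z : br x (c *: z) = c *: br x z. Proof. exact: (linZ (brR x)). Qed.
Lemma brNl x z : br (- x) z = - br x z. Proof. exact: (linN (brL z)). Qed.
Lemma brNr x z : br x (- z) = - br x z. Proof. exact: (linN (brR x)). Qed.
Lemma brBl x y z : br (x - y) z = br x z - br y z. Proof. exact: (linB (brL z)). Qed.
Lemma brBr x y z : br x (y - z) = br x y - br x z. Proof. exact: (linB (brR x)). Qed.
Lemma br_suml (I : Type) (r : seq I) (P : pred I) (F : I -> M) z :
  br (\sum_(i <- r | P i) F i) z = \sum_(i <- r | P i) br (F i) z.
Proof. exact: (lin_sum (brL z)). Qed.
Lemma br_sumr (I : Type) (r : seq I) (P : pred I) (F : I -> M) x :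
  br x (\sum_(i <- r | P i) F i) = \sum_(i <- r | P i) br x (F i).
Proof. exact: (lin_sum (brR x)). Qed.

Lemma deg_sp p : subsp (deg p).
Proof. split; [exact: gla_deg0 | exact: gla_degD]. Qed.

Definition gdec (x : M) := constructive_indefinite_description _ (gla_decomp x).
Definition pN (x : M) : nat := proj1_sig (gdec x).
Definition pf (x : M) : nat -> M :=
  proj1_sig (constructive_indefinite_description _ (proj2_sig (gdec x))).
Lemma pf_spec x : (forall p, deg p (pf x p)) /\ x = \sum_(p < pN x) pf x p.
Proof.
rewrite /pf /pN; case: (constructive_indefinite_description _ _) => /= f Hf.
exact: Hf.
Qed.
Definition hp (p : nat) (x : M) : M := if (p < pN x)%N then pf x p else 0.

Lemma sum_ext (N K : nat) (g : nat -> M) : (N <= K)%N ->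
  \sum_(r < K) (if (r < N)%N then g r else 0) = \sum_(r < N) g r.
Proof.
move=> NK; rewrite -(subnKC NK) big_split_ord /=.
rewrite [X in _ + X]big1 ?addr0.
  by apply: eq_bigr => i _; rewrite ltn_ord.
by move=> i _; rewrite ltnNge leq_addr.
Qed.

Lemma uniq_dec (N N' : nat) (f g : nat -> M) :
  (forall r, deg r (f r)) -> (forall r, deg r (g r)) ->
  \sum_(r < N) f r = \sum_(r < N') g r ->
  forall p, (if (p < N)%N then f p else 0) = (if (p < N') %N then g p else 0).
Proof.
move=> Hf Hg Hs p.
pose h r := (if (r < N)%N then f r else 0) - (if (r < N')%N then g r else 0).
have Hh : forall r, deg r (h r).
  move=> r; apply: (spB (deg_sp r)).
    by case: ifP => _; [exact: Hf | exact: gla_deg0].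
  by case: ifP => _; [exact: Hg | exact: gla_deg0].
have Hsum : \sum_(r < maxn N N') h r = 0.
  rewrite sumrB sum_ext ?leq_maxl // sum_ext ?leq_maxr // Hs subrr //.
case: (ltnP p (maxn N N')) => Hp.
  by apply/eqP; rewrite -subr_eq0; apply/eqP; exact: (gla_direct Hh Hsum Hp).
rewrite geq_max in Hp; case/andP: Hp => H1 H2.
by rewrite ltnNge H1 ltnNge H2.
Qed.

Lemma pi_spec (N : nat) (g : nat -> M) : (forall r, deg r (g r)) ->
  forall p, hp p (\sum_(r < N) g r) = if (p < N)%N then g p else 0.
Proof.
move=> Hg p; rewrite /hp.
have [H1 H2] := pf_spec (\sum_(r < N) g r).
exact: (uniq_dec H1 Hg (esym H2)).
Qed.

Lemma pi_deg p x : deg p (hp p x).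
Proof. rewrite /hp; case: ifP => _; [exact: (pf_spec x).1 | exact: gla_deg0]. Qed.

Lemma pi_big x r : (pN x <= r)%N -> hp r x = 0.
Proof. by move=> H; rewrite /hp ltnNge H. Qed.

Lemma pi_sum x K : (pN x <= K)%N -> x = \sum_(r < K) hp r x.
Proof. by move=> H; rewrite /hp sum_ext // -(pf_spec x).2. Qed.

Lemma pi_lin p : forall (c : rat) x y, hp p (c *: x + y) = c *: hp p x + hp p y.
Proof.
move=> c x y.
pose K := maxn (pN x) (pN y).
have -> : c *: x + y = \sum_(r < K) (c *: hp r x + hp r y).
  rewrite big_split /= -scaler_sumr -!pi_sum //; [exact: leq_maxr | exact: leq_maxl].
rewrite (@pi_spec K (fun r => c *: hp r x + hp r y)); last first.
  by move=> r; apply: (deg_sp r).2; apply: pi_deg.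
case: ifP => // /negbT; rewrite -leqNgt geq_max => /andP [H1 H2].
by rewrite !pi_big // scaler0 addr0.
Qed.

Lemma pi0 p : hp p 0 = 0. Proof. exact: (lin0 (@pi_lin p)). Qed.
Lemma piD p x y : hp p (x + y) = hp p x + hp p y. Proof. exact: (linD (@pi_lin p)). Qed.
Lemma piZ p c x : hp p (c *: x) = c *: hp p x. Proof. exact: (linZ (@pi_lin p)). Qed.
Lemma piB p x y : hp p (x - y) = hp p x - hp p y. Proof. exact: (linB (@pi_lin p)). Qed.
Lemma pi_sumE p (I : Type) (r : seq I) (P : pred I) (F : I -> M) :
  hp p (\sum_(i <- r | P i) F i) = \sum_(i <- r | P i) hp p (F i).
Proof. exact: (lin_sum (@pi_lin p)). Qed.

Lemma pi_hom d z p : deg d z -> hp p z = if p == d then z else 0.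
Proof.
move=> Hz.
have E : z = \sum_(r < d.+1) (fun r : nat => if r == d then z else 0) r.
  rewrite big_ord_recr /= eqxx big1 ?add0r // => i _.
  by rewrite (ltn_eqF (ltn_ord i)).
rewrite [in LHS]E (@pi_spec d.+1 (fun r : nat => if r == d then z else 0)); last by move=> r /=; case: eqP => [->|_] //; exact: gla_deg0.
by case: (ltnP p d.+1) => // H; rewrite gtn_eqF.
Qed.

Lemma pi_id d z : deg d z -> hp d z = z.
Proof. by move=> Hz; rewrite (pi_hom d Hz) eqxx. Qed.

End GL.

Lemma pi_morph (M M' : GLie) (f : M -> M') : GLie_morph f ->
  forall p x, hp p (f x) = f (hp p x).
Proof.
move=> [fL [fD fB]] p x.
have -> : f x = \sum_(r < pN x) f (hp r x).
  by rewrite -(lin_sum fL) -pi_sum.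
rewrite (@pi_spec _ (pN x) (fun r => f (hp r x))); last by move=> r; apply: fD; apply: pi_deg.
case: ifP => // /negbT; rewrite -leqNgt => H.
by rewrite pi_big // (lin0 fL).
Qed.

Definition BRS (M : GLie) (P : M -> Prop) (x : M) : Prop :=
  exists (n : nat) (xs ys : 'I_n -> M),
    (forall i, P (ys i)) /\ x = \sum_(i < n) gla_br (xs i) (ys i).

Lemma lcsSS (M : GLie) k (x : M) : lcs k.+2 x = BRS (lcs k.+1) x.
Proof. by []. Qed.

Section BRSsec.
Variable M : GLie.
Local Notation br := (@gla_br M).
Local Notation deg := (@gla_deg M).

Lemma BRS_sp (P : M -> Prop) : subsp (BRS P).
Proof.
split.
  by exists 0%N, (fun _ => 0), (fun _ => 0); split; [by case | by rewrite big_ord0].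
move=> c x y [n [xs [ys [Hy ->]]]] [m [xs' [ys' [Hy' ->]]]].
exists (n + m)%N.
exists (fun i => match split i with inl j => c *: xs j | inr j => xs' j end).
exists (fun i => match split i with inl j => ys j | inr j => ys' j end).
split; first by move=> i; case: (split i).
rewrite big_split_ord /= scaler_sumr; congr (_ + _); apply: eq_bigr => i _.
  by rewrite (unsplitK (inl i) : split (lshift m i) = inl i) brZl.
by rewrite (unsplitK (inr i) : split (rshift n i) = inr i).
Qed.

Lemma BRS_br (P : M -> Prop) x y : P y -> BRS P (br x y).
Proof.
by move=> Hy; exists 1%N, (fun _ => x), (fun _ => y); split => //; rewrite big_ord1.
Qed.

Lemma BRS_mono (P Q : M -> Prop) x : (forall y, P y -> Q y) -> BRS P x -> BRS Q x.
Proof. by move=> H [n [xs [ys [Hy ->]]]]; exists n, xs, ys; split => // i; apply: H. Qed.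

Lemma lcs_sp k : subsp (@lcs M k).
Proof. by case: k => [|[|k]] //; exact: BRS_sp. Qed.

Lemma lcs_S k (x : M) : lcs k.+1 x -> lcs k x.
Proof.
elim: k x => [|[|k] IH] x //.
by rewrite !lcsSS; apply: BRS_mono.
Qed.

Lemma lcs_mono k m (x : M) : (k <= m)%N -> lcs m x -> lcs k x.
Proof.
move=> /subnKC <-; elim: (m - k)%N => [|d IH]; first by rewrite addn0.
by rewrite addnS => /lcs_S; exact: IH.
Qed.

Lemma lcs_br k (x y : M) : lcs k y -> lcs k.+1 (br x y).
Proof. by case: k => [|k] // Hy; rewrite lcsSS; apply: BRS_br. Qed.

Lemma br_dec (a b : M) :
  br a b = \sum_(r < pN a) \sum_(s < pN b) br (hp r a) (hp s b).
Proof.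
rewrite {1}(@pi_sum _ a (pN a)) // br_suml; apply: eq_bigr => r _.
by rewrite {1}(@pi_sum _ b (pN b)) // br_sumr.
Qed.

Lemma pi_br_sp (P : M -> Prop) p (a b : M) : subsp P ->
  (forall r s, (r + s)%N = p -> P (br (hp r a) (hp s b))) -> P (hp p (br a b)).
Proof.
move=> HP H; rewrite br_dec pi_sumE; apply: sp_sum => // r _.
rewrite pi_sumE; apply: sp_sum => // s _.
rewrite (pi_hom p (gla_br_deg (pi_deg r a) (pi_deg s b))).
case: eqP => [Ep|_]; [exact: H | exact: sp0].
Qed.

Lemma lcs_pi k p (x : M) : lcs k x -> lcs k (hp p x).
Proof.
elim: k p x => [|[|k] IH] p x //.
move=> [n [xs [ys [Hy ->]]]]; rewrite pi_sumE; apply: sp_sum; first exact: lcs_sp.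
move=> i _; apply: pi_br_sp; first exact: lcs_sp.
move=> r s _; apply: lcs_br; apply: IH; exact: Hy.
Qed.

Lemma lcs2_br j (x z : M) : lcs 2 x -> lcs j z -> lcs j.+2 (br x z).
Proof.
move=> [n [xs [ys [_ ->]]]] Hz; rewrite br_suml; apply: sp_sum; first exact: lcs_sp.
move=> i _; rewrite (br_dec (xs i)) br_suml; apply: sp_sum; first exact: lcs_sp.
move=> r _; rewrite br_suml; apply: sp_sum; first exact: lcs_sp.
move=> s _.
have J := gla_jacobi z (pi_deg r (xs i)) (pi_deg s (ys i)).
have -> : br (br (hp r (xs i)) (hp s (ys i))) z =
   br (hp r (xs i)) (br (hp s (ys i)) z)
   - ((-1) ^+ (r * s) : rat) *: br (hp s (ys i)) (br (hp r (xs i)) z).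
  by rewrite J addrK.
apply: (spB (lcs_sp _)); first by do 2 apply: lcs_br.
by apply: (spZ (lcs_sp _)); do 2 apply: lcs_br.
Qed.

End BRSsec.

Section Morph.
Variables (M M' : GLie) (f : M -> M') (Hf : GLie_morph f).

Lemma lcs_morph k (x : M) : lcs k x -> lcs k (f x).
Proof.
case: Hf => fL [fD fB].
elim: k x => [|[|k] IH] x //.
move=> [n [xs [ys [Hy ->]]]]; exists n, (fun i => f (xs i)), (fun i => f (ys i)).
split; first by move=> i; apply: IH; exact: Hy.
by rewrite (lin_sum fL); apply: eq_bigr => i _; rewrite fB.
Qed.

Lemma lcs_lift (Hs : forall y : M', exists x, f x = y) k (z : M') :
  lcs k z -> exists y, lcs k y /\ f y = z.
Proof.
case: Hf => fL [fD fB].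
elim: k z => [|[|k] IH] z.
- by move=> _; have [x Hx] := Hs z; exists x; split.
- by move=> _; have [x Hx] := Hs z; exists x; split.
move=> [n [xs [ys [Hy ->]]]].
pose X i := proj1_sig (constructive_indefinite_description _ (Hs (xs i))).
pose Y i := proj1_sig (constructive_indefinite_description _ (IH _ (Hy i))).
have HX i : f (X i) = xs i.
  by rewrite /X; case: (constructive_indefinite_description _ _).
have HY i : lcs k.+1 (Y i) /\ f (Y i) = ys i.
  by rewrite /Y; case: (constructive_indefinite_description _ _).
exists (\sum_(i < n) gla_br (X i) (Y i)); split.
  by exists n, X, Y; split => // i; case: (HY i).
rewrite (lin_sum fL); apply: eq_bigr => i _; rewrite fB HX; by case: (HY i) => _ ->.
Qed.

End Morph.

Lemma nat_min (S : nat -> Prop) n : S n -> exists k, S k /\ forall j, S j -> (k <= j)%N.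
Proof.
elim/ltn_ind: n => n IH Sn.
case: (classic (exists j, (j < n)%N /\ S j)) => [[j [jn Sj]]|H].
  exact: (IH j jn Sj).
exists n; split => // j Sj; rewrite leqNgt; apply/negP => jn; apply: H; exists j; split => //.
Qed.

Lemma span_in (W : vectType rat) (Q : W -> Prop) (X : seq W) x :
  subsp Q -> (forall y, y \in X -> Q y) -> (x \in <<X>>%VS) -> Q x.
Proof.
move=> HQ; elim: X x => [|v X IH] x HX.
  by rewrite span_nil memv0 => /eqP ->; exact: sp0.
rewrite span_cons => /memv_addP [y Hy [z Hz ->]].
case/vlineP: Hy => k ->.
apply: (HQ.2); first by apply: HX; rewrite inE eqxx.
by apply: IH => // t Ht; apply: HX; rewrite inE Ht orbT.
Qed.

Lemma artin (A : Type) (W : vectType rat) (P : A -> W -> Prop) :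
  inhabited A -> (forall a, subsp (P a)) ->
  (forall a b, exists g, forall x, P g x -> P a x /\ P b x) ->
  exists g, forall b x, P g x -> P b x.
Proof.
move=> [a0] HP Hdir.
pose Fr a k := exists X : seq W, size X = k /\ free X /\ forall y, y \in X -> P a y.
have Hbound : forall a k, Fr a k -> (k <= \dim (@fullv _ W))%N.
  move=> a k [X [<- [HX _]]].
  move/eqP: HX => <-; apply: dimvS; exact: subvf.
have S0 : exists a, ~ Fr a (\dim (@fullv _ W)).+1.
  by exists a0 => H; have := Hbound _ _ H; rewrite ltnn.
have [k0 [[g Hg] Hmin]] := @nat_min (fun k => exists a, ~ Fr a k.+1) _ S0.
have Hall : forall a, Fr a k0.
  move=> a; case: k0 Hg Hmin => [|k] Hg Hmin.
    by exists [::]; split => //; split => //; exact: nil_free.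
  apply: NNPP => H.
  by have := Hmin k (ex_intro _ a H); rewrite ltnn.
exists g => b x Hx.
have [h Hh] := Hdir g b.
have [X [sX [fX PX]]] := Hall h.
case: (boolP (x \in <<X>>%VS)) => Hin.
  by apply: (span_in (HP b)) Hin => y /PX /Hh [].
exfalso; apply: Hg; exists (x :: X); split; first by rewrite /= sX.
split; first by rewrite free_cons Hin fX.
move=> y; rewrite inE => /orP [/eqP ->|] //.
by move=> /PX /Hh [].
Qed.

Section Inj.
Variables (L : lmodType rat) (A : Type) (R : A -> L -> Prop).
Hypotheses (HA : inhabited A) (HR : forall a, subsp (R a))
  (Hdir : forall a b, exists g, forall x, R g x -> R a x /\ R b x).

Lemma inj_lemma (W : vectType rat) (Phi : W -> L) :
  (forall (c : rat) x y, Phi (c *: x + y) = c *: Phi x + Phi y) ->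
  exists g, forall b w, R g (Phi w) -> R b (Phi w).
Proof.
move=> HPhi.
have := @artin A W (fun a w => R a (Phi w)) HA; apply.
  move=> a; split; first by rewrite (lin0 HPhi); exact: sp0.
  by move=> c x y Hx Hy; rewrite HPhi; apply: (HR a).2.
move=> a b; have [g Hg] := Hdir a b; exists g => x; exact: Hg.
Qed.

Lemma pick_lemma (W : vectType rat) (Phi : W -> L) (u : L) :
  (forall (c : rat) x y, Phi (c *: x + y) = c *: Phi x + Phi y) ->
  (forall a, exists w, R a (u - Phi w)) ->
  exists w, forall a, R a (u - Phi w).
Proof.
move=> HPhi Hex.
pose Psi (tw : (rat^o * W)%type) : L := (tw.1 : rat) *: u - Phi tw.2.
have HPsi : forall (c : rat) x y, Psi (c *: x + y) = c *: Psi x + Psi y.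
  move=> c [t w] [t' w']; rewrite /Psi /= HPhi.
  have -> : (c *: t + t' : rat) = c * t + t' by [].
  by rewrite scalerDl scalerBr scalerA opprD addrACA.
have [g Hg] := inj_lemma HPsi.
have [w Hw] := Hex g.
exists w => b; have := Hg b ((1 : rat^o), w).
by rewrite /Psi /= scale1r; apply.
Qed.
End Inj.

Section Main.
Variables (L : GLie) (A : Type) (La : A -> GLie) (rho : forall a, L -> La a).
Hypothesis HCE : complete_enriched rho.

Local Notation br := (@gla_br L).
Local Notation deg := (@gla_deg L).
Local Notation Lk := (lcs_closure rho).

Lemma HA : inhabited A. Proof. by case: HCE. Qed.
Lemma Hmor a : GLie_morph (rho a). Proof. by case: HCE => _ [H _]; case: (H a). Qed.
Lemma Hsurj a : forall y, exists x, rho a x = y. Proof. by case: HCE => _ [H _]; case: (H a). Qed.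
Lemma Hnil a : GLie_nilpotent (La a). Proof. by case: HCE => _ [_ [H _]]; case: (H a). Qed.
Lemma Hdir a b : exists g, forall x, rho g x = 0 -> rho a x = 0 /\ rho b x = 0.
Proof. by case: HCE => _ [_ [_ [H _]]]. Qed.
Lemma Hsep x : (forall a, rho a x = 0) -> x = 0.
Proof. by case: HCE => _ [_ [_ [_ [H _]]]]; apply: H. Qed.
Lemma Hcomp : forall p (xa : forall a, La a),
          (forall a, gla_deg p (xa a)) ->
          (forall a g, (forall y, rho g y = 0 -> rho a y = 0) ->
                 forall y, rho g y = xa g -> rho a y = xa a) ->
          exists x, gla_deg p x /\ forall a, rho a x = xa a.
Proof. by case: HCE => _ [_ [_ [_ [_ H]]]]. Qed.

Lemma rhoL a : forall (c : rat) x y, rho a (c *: x + y) = c *: rho a x + rho a y.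
Proof. by case: (Hmor a). Qed.
Lemma rho_deg a p x : deg p x -> gla_deg p (rho a x).
Proof. by case: (Hmor a) => _ [H _]; apply: H. Qed.
Lemma rho_br a x y : rho a (br x y) = gla_br (rho a x) (rho a y).
Proof. by case: (Hmor a) => _ [_ H]. Qed.
Lemma rho0 a : rho a 0 = 0. Proof. exact: lin0 (@rhoL a). Qed.
Lemma rhoD a x y : rho a (x + y) = rho a x + rho a y. Proof. exact: (linD (@rhoL a) x y). Qed.
Lemma rhoB a x y : rho a (x - y) = rho a x - rho a y. Proof. exact: (linB (@rhoL a) x y). Qed.
Lemma rhoZ a c x : rho a (c *: x) = c *: rho a x. Proof. exact: (linZ (@rhoL a) c x). Qed.

Lemma Lk_iff k x : Lk k x <-> forall a, lcs k (rho a x).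
Proof.
split.
  by move=> H a; have [y [Hy <-]] := H a; apply: lcs_morph => //; exact: Hmor.
move=> H a; have [y [Hy E]] := lcs_lift (Hmor a) (@Hsurj a) (H a).
by exists y.
Qed.

Lemma R_sp a k : subsp (fun x => lcs k (rho a x)).
Proof.
split; first by rewrite rho0; exact: sp0 (lcs_sp _ _).
by move=> c x y Hx Hy; rewrite rhoL; apply: (lcs_sp _ _).2.
Qed.

Lemma Lk_sp k : subsp (Lk k).
Proof.
split; first by apply/Lk_iff => a; exact: (sp0 (R_sp a k)).
move=> c x y /Lk_iff Hx /Lk_iff Hy; apply/Lk_iff => a.
exact: (R_sp a k).2.
Qed.

Lemma R_dir k : forall a b, exists g, forall x,
  lcs k (rho g x) -> lcs k (rho a x) /\ lcs k (rho b x).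
Proof.
move=> a b; have [g Hg] := Hdir a b; exists g => x Hx.
have [y [Hy E]] := lcs_lift (Hmor g) (@Hsurj g) Hx.
have : rho g (x - y) = 0 by rewrite rhoB E subrr.
move/Hg => [Ha Hb].
have Ea : rho a x = rho a y by apply/eqP; rewrite -subr_eq0 -rhoB Ha.
have Eb : rho b x = rho b y by apply/eqP; rewrite -subr_eq0 -rhoB Hb.
by rewrite Ea Eb; split; apply: lcs_morph => //; apply: Hmor.
Qed.

Lemma lcs_Lk k x : lcs k x -> Lk k x.
Proof. by move=> H a; exists x. Qed.

Lemma Lk_S k x : Lk k.+1 x -> Lk k x.
Proof. by move/Lk_iff => H; apply/Lk_iff => a; apply: lcs_S. Qed.

Lemma Lk_mono k m x : (k <= m)%N -> Lk m x -> Lk k x.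
Proof. by move=> km /Lk_iff H; apply/Lk_iff => a; apply: (lcs_mono km). Qed.

Lemma Lk_br k x y : Lk k y -> Lk k.+1 (br x y).
Proof. by move/Lk_iff => H; apply/Lk_iff => a; rewrite rho_br; apply: lcs_br. Qed.

Lemma Lk_pi k p x : Lk k x -> Lk k (hp p x).
Proof.
move/Lk_iff => H; apply/Lk_iff => a.
rewrite -(pi_morph (Hmor a)); exact: lcs_pi.
Qed.

Lemma Lk2_br j l y : Lk 2 l -> lcs j y -> Lk j.+2 (br l y).
Proof.
move/Lk_iff => H Hy; apply/Lk_iff => a; rewrite rho_br; apply: lcs2_br => //.
by apply: lcs_morph => //; apply: Hmor.
Qed.

Lemma Lk01 x : Lk 0 x /\ Lk 1 x.
Proof. by split; apply/Lk_iff. Qed.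

Lemma Lk_zero x : (forall n, Lk n x) -> x = 0.
Proof.
move=> H; apply: Hsep => a.
have [n Hn] := Hnil a.
by apply: Hn; move: (H n) => /Lk_iff; apply.
Qed.

Lemma deg_lift a p (y : La a) : gla_deg p y -> exists x, deg p x /\ rho a x = y.
Proof.
move=> Hy; have [x0 E] := @Hsurj a y.
exists (hp p x0); split; first exact: pi_deg.
by rewrite -(pi_morph (Hmor a)) E (pi_id Hy).
Qed.

Lemma Lk_cauchy d (ys : nat -> L) : (forall t, deg d (ys t)) ->
  (forall t, Lk t (ys t.+1 - ys t)) ->
  exists y, deg d y /\ forall t, Lk t (y - ys t).
Proof.
move=> Hd Hc.
pose N a := proj1_sig (constructive_indefinite_description _ (Hnil a)).
have HN : forall a (z : La a), lcs (N a) z -> z = 0.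
  by move=> a; rewrite /N; case: (constructive_indefinite_description _ _).
have tele : forall a t s, (t <= s)%N -> lcs t (rho a (ys s - ys t)).
  move=> a t s /subnKC <-; elim: (s - t)%N => [|e IH].
    by rewrite addn0 subrr rho0; exact: (sp0 (lcs_sp _ _)).
  have -> : ys (t + e.+1)%N - ys t = (ys (t + e).+1 - ys (t + e)%N) + (ys (t + e)%N - ys t).
    by rewrite addnS addrA subrK.
  rewrite rhoD; apply: (spD (lcs_sp _ _)) => //.
  apply: (@lcs_mono _ t (t + e)%N); first exact: leq_addr.
  by move: (Hc (t + e)%N) => /Lk_iff; apply.
have const : forall a s, (N a <= s)%N -> rho a (ys s) = rho a (ys (N a)).
  move=> a s Hs; apply/eqP; rewrite -subr_eq0 -rhoB; apply/eqP.
  by apply: HN; apply: tele.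
pose xa a := rho a (ys (N a)).
have [y [Hy Hya]] : exists x, deg d x /\ forall a, rho a x = xa a.
  apply: Hcomp; first by move=> a; apply: rho_deg.
  move=> a g Hag z Hz.
  have E1 : rho a z = rho a (ys (N g)).
    apply/eqP; rewrite -subr_eq0 -rhoB; apply/eqP; apply: Hag.
    by rewrite rhoB Hz subrr.
  rewrite E1 /xa.
  have E2 : rho a (ys (N g)) = rho a (ys (maxn (N a) (N g))).
    apply/eqP; rewrite eq_sym -subr_eq0 -rhoB; apply/eqP; apply: Hag.
    by rewrite rhoB const ?leq_maxr // subrr.
  by rewrite E2 const // leq_maxl.
exists y; split => // t; apply/Lk_iff => a.
rewrite rhoB Hya /xa -(const a (maxn (N a) t)) ?leq_maxl // -rhoB.
by apply: tele; exact: leq_maxr.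
Qed.

End Main.

Section Span.
Variable V : lmodType rat.

Definition lspan (s : seq V) (x : V) : Prop :=
  exists c : nat -> rat, x = \sum_(i < size s) c i *: s`_i.

Lemma lspan_nil x : lspan [::] x <-> x = 0.
Proof. by split; [move=> [c ->]; rewrite big_ord0 | move=> ->; exists (fun _ => 0); rewrite big_ord0]. Qed.

Lemma lspan_cons a s x : lspan (a :: s) x <-> exists k y, lspan s y /\ x = k *: a + y.
Proof.
split.
  move=> [c ->]; rewrite big_ord_recl /=.
  exists (c 0%N), (\sum_(i < size s) c i.+1 *: s`_i); split.
    by exists (fun i => c i.+1).
  by congr (_ + _); apply: eq_bigr => i _; rewrite lift0.
move=> [k [y [[c ->] ->]]].
exists (fun i => if i is i'.+1 then c i' else k).
by rewrite big_ord_recl /=; congr (_ + _); apply: eq_bigr => i _; rewrite lift0.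
Qed.

Lemma lspan0 s : lspan s 0.
Proof. by exists (fun _ => 0); rewrite big1 // => i _; rewrite scale0r. Qed.

Lemma lspan_sp s : subsp (lspan s).
Proof.
split; first exact: lspan0.
elim: s => [|a s IH] c x y.
  by move=> /lspan_nil -> /lspan_nil ->; apply/lspan_nil; rewrite scaler0 addr0.
move=> /lspan_cons [k [x' [Hx ->]]] /lspan_cons [k' [y' [Hy ->]]].
apply/lspan_cons; exists (c * k + k'), (c *: x' + y'); split; first exact: IH.
by rewrite scalerDr scalerA scalerDl addrACA.
Qed.

Lemma lspan_P (P : V -> Prop) s x : subsp P -> (forall y, y \in s -> P y) -> lspan s x -> P x.
Proof.
move=> HP; elim: s x => [|a s IH] x Hs.
  by move/lspan_nil => ->; exact: sp0.
move/lspan_cons => [k [y [Hy ->]]]; apply: HP.2.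
  by apply: Hs; rewrite inE eqxx.
by apply: IH => // z Hz; apply: Hs; rewrite inE Hz orbT.
Qed.

Lemma lspan_cat s t y z : lspan s y -> lspan t z -> lspan (s ++ t) (y + z).
Proof.
elim: s y => [|a s IH] y.
  by move/lspan_nil => ->; rewrite add0r.
move/lspan_cons => [k [y' [Hy ->]]] Hz; apply/lspan_cons.
by exists k, (y' + z); split; [exact: IH | rewrite addrA].
Qed.

Lemma lspan_map (I : Type) (r : seq I) (f : I -> V) (k : I -> rat) :
  lspan (map f r) (\sum_(i <- r) k i *: f i).
Proof.
elim: r => [|i r IH]; first by rewrite big_nil; exact: lspan0.
rewrite big_cons /=; apply/lspan_cons; exists (k i), (\sum_(j <- r) k j *: f j); split => //.
Qed.

Lemma lspan_flat (I : Type) (r : seq I) (f : I -> seq V) (y : I -> V) :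
  (forall i, lspan (f i) (y i)) -> lspan (flatten (map f r)) (\sum_(i <- r) y i).
Proof.
move=> H; elim: r => [|i r IH]; first by rewrite big_nil; exact: lspan0.
by rewrite big_cons /=; apply: lspan_cat.
Qed.

Definition Phi (s : seq V) (r : 'rV[rat]_(size s)) : V :=
  \sum_(i < size s) r 0 i *: s`_i.

Lemma Phi_lin s : forall (c : rat) x y, @Phi s (c *: x + y) = c *: @Phi s x + @Phi s y.
Proof.
move=> c x y; rewrite /Phi scaler_sumr -big_split /=; apply: eq_bigr => i _.
by rewrite !mxE scalerDl scalerA.
Qed.

Lemma lspan_Phi s x : lspan s x -> exists r, x = @Phi s r.
Proof.
move=> [c ->]; exists (\row_(i < size s) c i); rewrite /Phi.
by apply: eq_bigr => i _; rewrite mxE.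
Qed.

Lemma Phi_lspan s r : lspan s (@Phi s r).
Proof.
exists (fun i => if insub i is Some j then r 0 j else 0); rewrite /Phi.
by apply: eq_bigr => i _; rewrite valK.
Qed.

End Span.

Lemma lspan_mapf (V W : lmodType rat) (g : V -> W) s y :
  (forall (c : rat) x z, g (c *: x + z) = c *: g x + g z) ->
  lspan s y -> lspan (map g s) (g y).
Proof.
move=> gL; elim: s y => [|a s IH] y.
  by move/lspan_nil => ->; rewrite (lin0 gL); exact: lspan0.
move/lspan_cons => [k [y' [Hy ->]]]; rewrite gL /=; apply/lspan_cons.
by exists k, (g y'); split => //; apply: IH.
Qed.


Section Main2.
Variables (L : GLie) (A : Type) (La : A -> GLie) (rho : forall a, L -> La a).
Hypothesis HCE : complete_enriched rho.
Hypothesis Hfin : forall p, findim_quot_deg (lcs_closure rho 2) p.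

Local Notation br := (@gla_br L).
Local Notation deg := (@gla_deg L).
Local Notation Lk := (lcs_closure rho).

Definition Vdat r := constructive_indefinite_description _ (Hfin r).
Definition Vn r : nat := proj1_sig (Vdat r).
Definition Vv r : 'I_(Vn r) -> L :=
  proj1_sig (constructive_indefinite_description _ (proj2_sig (Vdat r))).
Lemma V_spec r : (forall i, deg r (@Vv r i)) /\
    forall x, deg r x -> exists c : 'I_(Vn r) -> rat,
      Lk 2 (x - \sum_(i < Vn r) c i *: @Vv r i).
Proof.
rewrite /Vv /Vn; case: (constructive_indefinite_description _ _) => /= v Hv.
exact: Hv.
Qed.

Definition brsum (p : nat) (Z : nat -> nat -> L) : L :=
  \sum_(r < p.+1) \sum_(b < Vn r) br (Vv b) (Z r b).

Lemma brsum_P (P : L -> Prop) p (Z : nat -> nat -> L) : subsp P ->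
  (forall (r : 'I_p.+1) (b : 'I_(Vn r)), P (br (Vv b) (Z r b))) -> P (brsum p Z).
Proof.
move=> HP H; apply: sp_sum => // r _; apply: sp_sum => // b _; exact: H.
Qed.

Lemma brsumD p (Z Z' : nat -> nat -> L) : brsum p (fun r b => Z r b + Z' r b) = brsum p Z + brsum p Z'.
Proof.
rewrite /brsum -big_split; apply: eq_bigr => r _.
rewrite -big_split; apply: eq_bigr => b _; exact: brDr.
Qed.

Lemma brsumB p (Z Z' : nat -> nat -> L) : brsum p (fun r b => Z r b - Z' r b) = brsum p Z - brsum p Z'.
Proof.
rewrite /brsum -sumrB; apply: eq_bigr => r _.
rewrite -sumrB; apply: eq_bigr => b _; exact: brBr.
Qed.

Lemma brsum0 p : brsum p (fun _ _ => 0) = 0.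
Proof.
rewrite /brsum big1 // => r _; rewrite big1 // => b _; exact: br0r.
Qed.

Lemma brsum_deg p (Z : nat -> nat -> L) : (forall r b, deg (p - r) (Z r b)) -> deg p (brsum p Z).
Proof.
move=> H; apply: brsum_P; first exact: deg_sp _ _.
move=> r b; have rp : (r + (p - r) = p)%N by rewrite subnKC // -ltnS.
by have := gla_br_deg ((V_spec r).1 b) (H r b); rewrite rp.
Qed.

Definition good m p (Z : nat -> nat -> L) :=
  forall r b, deg (p - r) (Z r b) /\ lcs m (Z r b).

Lemma good_sp_T m p : subsp (fun y => exists Z, good m p Z /\ Lk m.+2 (y - brsum p Z)).
Proof.
split.
  exists (fun _ _ => 0); split; last by rewrite brsum0 subr0; exact: sp0 (Lk_sp HCE _).
  by move=> r b; split; [exact: gla_deg0 | exact: sp0 (lcs_sp _ _)].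
move=> c x y [Z [HZ Hx]] [Z' [HZ' Hy]].
exists (fun r b => c *: Z r b + Z' r b); split.
  move=> r b; have [d1 l1] := HZ r b; have [d2 l2] := HZ' r b.
  split; [exact: (spD (deg_sp _ _) (spZ (deg_sp _ _) _ d1) d2) |].
  exact: (spD (lcs_sp _ _) (spZ (lcs_sp _ _) _ l1) l2).
have -> : brsum p (fun r b => c *: Z r b + Z' r b) = c *: brsum p Z + brsum p Z'.
  rewrite brsumD; congr (_ + _); rewrite /brsum scaler_sumr; apply: eq_bigr => r _.
  by rewrite scaler_sumr; apply: eq_bigr => b _; rewrite brZr.
have -> : c *: x + y - (c *: brsum p Z + brsum p Z') =
          c *: (x - brsum p Z) + (y - brsum p Z').
  by rewrite scalerBr opprD addrACA.
exact: (spD (Lk_sp HCE _) (spZ (Lk_sp HCE _) _ Hx) Hy).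
Qed.

Lemma core_single m p r s x y : (r + s)%N = p -> deg r x -> deg s y -> lcs m.+1 y ->
  exists Z, good m.+1 p Z /\ Lk m.+3 (br x y - brsum p Z).
Proof.
move=> rsp Hx Hy Hly.
have [c Hc] := (V_spec r).2 x Hx.
pose cc (b : nat) : rat := if (insub b : option 'I_(Vn r)) is Some b' then c b' else 0.
pose Z (r' b : nat) := if r' == r then cc b *: y else 0.
exists Z; split.
  move=> r' b; rewrite /Z; case: eqP => [->|_].
    rewrite -rsp addKn; split; [exact: (spZ (deg_sp _ _) _ Hy) |].
    exact: (spZ (lcs_sp _ _)).
  by split; [exact: gla_deg0 | exact: sp0 (lcs_sp _ _)].
have rp : (r < p.+1)%N by rewrite ltnS -rsp leq_addr.
have -> : brsum p Z = br (\sum_(i < Vn r) c i *: @Vv r i) y.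
  rewrite /brsum (bigD1 (Ordinal rp)) //= [X in _ + X]big1 ?addr0.
    rewrite br_suml /Z eqxx; apply: eq_bigr => b _.
    by rewrite /cc valK brZr brZl.
  move=> r' Hr'; rewrite big1 // => b _.
  have -> : Z r' b = 0.
    rewrite /Z; case: eqP => // E; exfalso.
    by move: Hr'; rewrite -(inj_eq val_inj) /= E eqxx.
  exact: br0r.
rewrite -brBl; exact: Lk2_br.
Qed.

Lemma core m p w : lcs m.+2 w ->
  exists Z, good m.+1 p Z /\ Lk m.+3 (hp p w - brsum p Z).
Proof.
move=> [n [xs [ys [Hy ->]]]].
rewrite pi_sumE; apply: (sp_sum (good_sp_T m.+1 p)) => i _.
apply: (pi_br_sp (P := fun y => exists Z, good m.+1 p Z /\ Lk m.+3 (y - brsum p Z))); first exact: good_sp_T.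
move=> r s rs; apply: core_single rs _ _ _; [exact: pi_deg | exact: pi_deg |].
apply: lcs_pi; exact: Hy.
Qed.

Lemma Gj j : forall q, exists s : seq L,
  (forall y, y \in s -> deg q y /\ lcs j.+1 y) /\
  forall u, deg q u -> Lk j.+1 u -> exists y, lspan s y /\ Lk j.+2 (u - y).
Proof.
elim: j => [|j IH] q.
  exists (map (@Vv q) (index_enum 'I_(Vn q))); split.
    by move=> y /mapP [b _ ->]; split => //; exact: (V_spec q).1.
  move=> u Hu _; have [c Hc] := (V_spec q).2 u Hu.
  exists (\sum_(b < Vn q) c b *: @Vv q b); split => //.
  exact: (lspan_map (index_enum 'I_(Vn q)) (@Vv q) c).
pose S q' := proj1_sig (constructive_indefinite_description _ (IH q')).
have HS : forall q', (forall y, y \in S q' -> deg q' y /\ lcs j.+1 y) /\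
  forall u, deg q' u -> Lk j.+1 u -> exists y, lspan (S q') y /\ Lk j.+2 (u - y).
  by move=> q'; rewrite /S; case: (constructive_indefinite_description _ _).
pose D := flatten [seq flatten [seq map (br (@Vv r b)) (S (q - r)%N) | b : 'I_(Vn r) <- index_enum 'I_(Vn r)]
                  | r : 'I_q.+1 <- index_enum 'I_q.+1].
exists D; split.
  move=> y /flattenP [t /mapP [r _ ->] /flattenP [t' /mapP [b _ ->] /mapP [d Hd ->]]].
  have [dd ld] := (HS (q - r)%N).1 d Hd.
  split; last exact: lcs_br.
  have rq : (r + (q - r) = q)%N by rewrite subnKC // -ltnS.
  by have := gla_br_deg ((V_spec r).1 b) dd; rewrite rq.
move=> u Hu HLk.
have Hper : forall a, exists w, lcs j.+3 (rho a (u - @Phi _ D w)).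
  move=> a.
  have Hra := (Lk_iff HCE _ _).1 HLk a.
  have [w0 [Hw0 E0]] := lcs_lift (Hmor HCE a) (@Hsurj _ _ _ _ HCE a) Hra.
  have [Z [HZ HZL]] := core q Hw0.
  have HY : forall r b, exists y, lspan (S (q - r)%N) y /\ Lk j.+2 (Z r b - y).
    move=> r b; have [dZ lZ] := HZ r b.
    by apply: (HS (q - r)%N).2 => //; exact: lcs_Lk.
  pose Y r b := proj1_sig (constructive_indefinite_description _ (HY r b)).
  have HYs : forall r b, lspan (S (q - r)%N) (Y r b) /\ Lk j.+2 (Z r b - Y r b).
    by move=> r b; rewrite /Y; case: (constructive_indefinite_description _ _).
  have Hsp : lspan D (brsum q Y).
    rewrite /brsum /D.
    apply: (@lspan_flat _ _ (index_enum 'I_q.+1) (fun r : 'I_q.+1 =>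
       flatten [seq map (br (@Vv r b)) (S (q - r)%N) | b : 'I_(Vn r) <- index_enum 'I_(Vn r)])
      (fun r : 'I_q.+1 => \sum_(b < Vn r) br (Vv b) (Y r b))) => r.
    apply: (@lspan_flat _ _ (index_enum 'I_(Vn r)) (fun b : 'I_(Vn r) => map (br (@Vv r b)) (S (q - r)%N))
      (fun b : 'I_(Vn r) => br (Vv b) (Y r b))) => b.
    apply: lspan_mapf; last exact: (HYs r b).1.
    by move=> c x z; exact: gla_brDr.
  have [wv Ewv] := lspan_Phi Hsp.
  exists wv; rewrite -Ewv.
  have E1 : rho a u = rho a (hp q w0).
    by rewrite -(pi_morph (Hmor HCE a)) E0 (pi_morph (Hmor HCE a)) (pi_id Hu).
  have HL : Lk j.+3 (hp q w0 - brsum q Y).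
    have -> : hp q w0 - brsum q Y =
      (hp q w0 - brsum q Z) + brsum q (fun r b => Z r b - Y r b).
      by rewrite brsumB addrA subrK.
    apply: (spD (Lk_sp HCE _)) => //.
    apply: brsum_P; first exact: Lk_sp.
    move=> r b; apply: (Lk_br HCE); exact: (HYs r b).2.
  by rewrite (rhoB HCE) E1 -(rhoB HCE); exact: ((Lk_iff HCE _ _).1 HL a).
have [w Hw] := pick_lemma (R := fun a x => lcs j.+3 (rho a x)) (HA HCE)
   (fun a => R_sp HCE a _) (R_dir HCE _) (@Phi_lin _ D) Hper.
exists (@Phi _ D w); split; first exact: Phi_lspan.
by apply/Lk_iff.
Qed.

Lemma Fullspan k q : exists s : seq L, (forall y, y \in s -> deg q y) /\
  forall u, deg q u -> exists y, lspan s y /\ Lk k (u - y).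
Proof.
elim: k => [|k IH].
  exists [::]; split => // u _; exists 0; split; [exact: lspan0 | exact: (Lk01 HCE _).1].
case: k IH => [|k] IH.
  exists [::]; split => // u _; exists 0; split; [exact: lspan0 | exact: (Lk01 HCE _).2].
have [s [Hs Hsp]] := IH.
have [s' [Hs' Hsp']] := Gj k q.
exists (s ++ s'); split.
  by move=> y; rewrite mem_cat => /orP [/Hs|/Hs' []].
move=> u Hu; have [y [Hy HL]] := Hsp u Hu.
have Hdy : deg q (u - y).
  apply: (spB (deg_sp _ _)) => //; exact: (lspan_P (deg_sp _ _) Hs Hy).
have [y' [Hy' HL']] := Hsp' (u - y) Hdy HL.
exists (y + y'); split; first exact: lspan_cat.
by rewrite opprD addrA.
Qed.

Lemma inj_idx p k : exists a, forall x, deg p x -> lcs k (rho a x) -> Lk k x.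
Proof.
have [s [Hs Hsp]] := Fullspan k p.
have [g Hg] := inj_lemma (R := fun a x => lcs k (rho a x)) (HA HCE)
   (fun a => R_sp HCE a _) (R_dir HCE _) (@Phi_lin _ s).
exists g => x Hx Hr.
have [y [Hy HL]] := Hsp x Hx.
have [r Er] := lspan_Phi Hy; subst y.
have R1 : lcs k (rho g (@Phi _ s r)).
  have -> : @Phi _ s r = x - (x - @Phi _ s r) by rewrite opprB addrC subrK.
  exact: (spB (R_sp HCE g k) Hr ((Lk_iff HCE _ _).1 HL g)).
apply/(Lk_iff HCE) => b.
have -> : x = @Phi _ s r + (x - @Phi _ s r) by rewrite addrC subrK.
exact: (spD (R_sp HCE b k) (Hg b r R1) ((Lk_iff HCE _ _).1 HL b)).
Qed.

Lemma iistep m p u : deg p u -> Lk m.+2 u ->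
  exists Z, good m.+1 p Z /\ Lk m.+3 (u - brsum p Z).
Proof.
move=> Hu HL.
have [a Ha] := inj_idx p m.+3.
have Hra := (Lk_iff HCE _ _).1 HL a.
have [w0 [Hw0 E0]] := lcs_lift (Hmor HCE a) (@Hsurj _ _ _ _ HCE a) Hra.
have [Z [HZ HZL]] := core p Hw0.
exists Z; split => //; apply: Ha.
  apply: (spB (deg_sp _ _)) => //; apply: brsum_deg => r b; exact: (HZ r b).1.
have E1 : rho a u = rho a (hp p w0).
  by rewrite -(pi_morph (Hmor HCE a)) E0 (pi_morph (Hmor HCE a)) (pi_id Hu).
by rewrite (rhoB HCE) E1 -(rhoB HCE); exact: ((Lk_iff HCE _ _).1 HZL a).
Qed.

Lemma ii_hom k' p x : (forall z, Lk k'.+1 z -> lcs k'.+1 z) ->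
  deg p x -> Lk k'.+2 x -> lcs k'.+2 x.
Proof.
move=> IHk Hx HL.
pose Inv t (Z : nat -> nat -> L) := (forall r b, deg (p - r) (Z r b) /\ Lk k'.+1 (Z r b))
   /\ Lk (k'.+2 + t) (x - brsum p Z).
have step : forall t Z, exists Z', Inv t Z ->
    Inv t.+1 Z' /\ forall r b, Lk (k'.+1 + t) (Z' r b - Z r b).
  move=> t Z; case: (classic (Inv t Z)) => [[HZ HLZ]|HN]; last by exists Z => /HN.
  have Hu : deg p (x - brsum p Z).
    apply: (spB (deg_sp _ _)) => //; apply: brsum_deg => r b; exact: (HZ r b).1.
  have HLu : Lk (k' + t).+2 (x - brsum p Z) by rewrite !addSn in HLZ.
  have [Z0 [HZ0 HL0]] := iistep Hu HLu.
  exists (fun r b => Z r b + Z0 r b) => _; split; [split|].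
  - move=> r b; have [d1 l1] := HZ r b; have [d2 l2] := HZ0 r b; split.
      exact: (spD (deg_sp _ _) d1 d2).
    apply: (spD (Lk_sp HCE _) l1); apply: (Lk_mono HCE (m := (k' + t).+1)).
      by rewrite ltnS leq_addr.
    exact: lcs_Lk.
  - rewrite brsumD opprD addrA.
    by have -> : (k'.+2 + t.+1 = (k' + t).+3)%N by rewrite addnS !addSn.
  - move=> r b; have -> : Z r b + Z0 r b - Z r b = Z0 r b by rewrite addrC addKr.
    rewrite addSn; apply: lcs_Lk; exact: (HZ0 r b).2.
pose F t Z := proj1_sig (constructive_indefinite_description _ (step t Z)).
have HF : forall t Z, Inv t Z -> Inv t.+1 (F t Z) /\
    forall r b, Lk (k'.+1 + t) (F t Z r b - Z r b).
  by move=> t Z; rewrite /F; case: (constructive_indefinite_description _ _) => Z' H; exact: H.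
pose Zs := fix Zs (t : nat) : nat -> nat -> L :=
  match t with 0 => (fun _ _ => 0) | t'.+1 => F t' (Zs t') end.
have HInv : forall t, Inv t (Zs t).
  elim => [|t IH].
    split; last by rewrite /= brsum0 subr0 addn0.
    by move=> r b; split; [exact: gla_deg0 | exact: sp0 (Lk_sp HCE _)].
  exact: (HF t _ IH).1.
have Hd : forall t r b, Lk (k'.+1 + t) (Zs t.+1 r b - Zs t r b).
  by move=> t r b; exact: (HF t _ (HInv t)).2.
have Hlim : forall r b, exists z, deg (p - r) z /\ forall t, Lk t (z - Zs t r b).
  move=> r b; apply: (Lk_cauchy HCE (ys := fun t => Zs t r b)).
    by move=> t; exact: ((HInv t).1 r b).1.
  move=> t; apply: (Lk_mono HCE (m := (k'.+1 + t)%N)); first exact: leq_addl.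
  exact: Hd.
pose Zl r b := proj1_sig (constructive_indefinite_description _ (Hlim r b)).
have HZl : forall r b, deg (p - r) (Zl r b) /\ forall t, Lk t (Zl r b - Zs t r b).
  by move=> r b; rewrite /Zl; case: (constructive_indefinite_description _ _).
have ZlL : forall r b, Lk k'.+1 (Zl r b).
  move=> r b; have -> : Zl r b = (Zl r b - Zs k'.+1 r b) + Zs k'.+1 r b by rewrite subrK.
  apply: (spD (Lk_sp HCE _)); first exact: (HZl r b).2.
  exact: ((HInv k'.+1).1 r b).2.
have Ex : x = brsum p Zl.
  apply/eqP; rewrite -subr_eq0; apply/eqP; apply: (Lk_zero HCE) => n.
  have -> : x - brsum p Zl =
     (x - brsum p (Zs n)) - brsum p (fun r b => Zl r b - Zs n r b).
    by rewrite brsumB opprB addrA subrK.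
  apply: (spB (Lk_sp HCE _)).
    apply: (Lk_mono HCE (m := (k'.+2 + n)%N)); first exact: leq_addl.
    exact: (HInv n).2.
  apply: (Lk_mono HCE (m := n.+1)); first exact: leqnSn.
  apply: brsum_P; first exact: Lk_sp.
  move=> r b; apply: (Lk_br HCE); exact: (HZl r b).2.
rewrite Ex; apply: brsum_P; first exact: lcs_sp.
move=> r b; apply: lcs_br; apply: IHk; exact: ZlL.
Qed.

Lemma ii_main k x : (1 <= k)%N -> Lk k x -> lcs k x.
Proof.
case: k => [//|k] _; elim: k x => [|k IH] x HL //.
rewrite (pi_sum (leqnn (pN x))); apply: sp_sum; first exact: lcs_sp.
move=> r _; apply: ii_hom; [exact: IH | exact: pi_deg | exact: Lk_pi].
Qed.

End Main2.

Unset Implicit Arguments.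

Theorem proposition3p1 (L : GLie) (A : Type) (La : A -> GLie)
    (rho : forall a, L -> La a) :
  @complete_enriched L A La rho ->
  (forall p, findim_quot_deg (@lcs_closure L A La rho 2) p) ->
  (forall (p k : nat), exists a,
      (forall x, gla_deg p x -> lcs k (rho a x) -> @lcs_closure L A La rho k x) /\
      (forall y : La a, gla_deg p y ->
         exists x, gla_deg p x /\ lcs k (rho a x - y))) /\
  (forall k, (1 <= k)%N -> forall x : L, lcs k x <-> @lcs_closure L A La rho k x) /\
  pronilpotent L.
Proof.
move=> HCE Hfin; split; [|split].
- move=> p k; have [a Ha] := inj_idx HCE Hfin p k.
  exists a; split; first exact: Ha.
  move=> y Hy; have [x [Hx E]] := deg_lift HCE Hy.
  by exists x; split => //; rewrite E subrr; exact: sp0 (lcs_sp _ _).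
- move=> k Hk x; split; [exact: lcs_Lk | exact: ii_main].
split.
  move=> x Hx; apply: (Lk_zero HCE) => n; apply: lcs_Lk; exact: Hx.
move=> p xs Hd Hc.
have [x [Hx Hl]] := Lk_cauchy HCE Hd (fun t => lcs_Lk rho (Hc t)).
exists x; split => // n; case: n => [|n] //.
by apply: (ii_main HCE Hfin) => //; exact: Hl.
Qed.
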